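(* Let $\gamma>1$ and let $f\in\mathcal K_\infty$ satisfy $f(x)>x$ for all $x>0$. Then there exists $g\in\mathcal K$ such that $g(f(x))=\gamma\,g(x)$ for all $x\in\mathbb R_+$.
   Context: $\mathcal K$: continuous strictly increasing functions $\alpha:\mathbb R_+\to\mathbb R_+$ with $\alpha(0)=0$; $\mathcal K_\infty$: those $\alpha\in\mathcal K$ with $\lim_{x\to+\infty}\alpha(x)=+\infty$. *)

(* Defs.v *)
(* concrete reals R. Functions R_+ -> R_+ are modelled as
   functions R -> R whose behaviour only matters on [0, +oo). *)
From Stdlib Require Import Reals.
Open Scope R_scope.

Definition maps_Rplus (a : R -> R) : Prop :=
  forall x, 0 <= x -> 0 <= a x.

Definition continuous_Rplus (a : R -> R) : Prop :=
  forall x, 0 <= x ->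
    forall eps, 0 < eps -> exists delta, 0 < delta /\
      forall y, 0 <= y -> Rabs (y - x) < delta -> Rabs (a y - a x) < eps.

Definition strict_incr_Rplus (a : R -> R) : Prop :=
  forall x y, 0 <= x -> x < y -> a x < a y.

Definition class_K (a : R -> R) : Prop :=
  maps_Rplus a /\ continuous_Rplus a /\ strict_incr_Rplus a /\ a 0 = 0.

Definition class_Kinf (a : R -> R) : Prop :=
  class_K a /\ (forall M, exists N, 0 <= N /\ forall x, N <= x -> M <= a x).

(* Main.v *)
Require Import Defs.
From Stdlib Require Import Reals Lra Lia ClassicalEpsilon Classical Ranalysis5.
Open Scope R_scope.

Definition Pgood (u : R -> R) : Prop :=
  (forall x, 0 <= x -> 0 <= u x) /\ strict_incr_Rplus u /\ u 0 = 0.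

Lemma Pgood_weak u : Pgood u -> forall x y, 0 <= x -> x <= y -> u x <= u y.
Proof.
  intros [_ [Hi _]] x y Hx Hxy. destruct (Req_dec x y) as [->|Hne]; [lra|].
  left; apply Hi; lra.
Qed.

Lemma Pgood_lt_inv u : Pgood u -> forall x y, 0 <= x -> 0 <= y -> u x < u y -> x < y.
Proof.
  intros Hu x y Hx Hy H. destruct (Rlt_le_dec x y); auto.
  pose proof (Pgood_weak u Hu y x Hy r). lra.
Qed.

Lemma Pgood_comp u v : Pgood u -> Pgood v -> Pgood (fun x => u (v x)).
Proof.
  intros [H1 [H2 H3]] [K1 [K2 K3]]. split; [|split].
  - intros; apply H1, K1; auto.
  - intros x y Hx Hxy. apply H2; [apply K1; auto| apply K2; auto].
  - rewrite K3; auto.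
Qed.

Lemma Pgood_iter u k : Pgood u -> Pgood (Nat.iter k u).
Proof.
  intros Hu. induction k.
  - split; [|split]; simpl; auto. intros x y _ H; auto.
  - destruct IHk as [H1 [H2 H3]]. destruct Hu as [K1 [K2 K3]].
    split; [|split].
    + intros; rewrite Nat.iter_succ; apply K1, H1; auto.
    + intros x y Hx Hxy; rewrite !Nat.iter_succ; apply K2; [apply H1; auto| apply H2; auto].
    + rewrite Nat.iter_succ, H3; auto.
Qed.

Lemma cont_of_surj (a : R -> R) : Pgood a ->
  (forall v, 0 <= v -> exists x, 0 <= x /\ a x = v) -> continuous_Rplus a.
Proof.
  intros Ha Hs x Hx eps Heps.
  assert (Ha0 : forall y, 0 <= y -> 0 <= a y) by apply Ha.
  destruct (Hs (a x + eps/2)) as [x2 [Hx2 E2]]. { pose proof (Ha0 x Hx); lra. }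
  assert (x < x2) by (apply (Pgood_lt_inv a Ha); auto; lra).
  destruct (Rle_lt_dec (a x) (eps/2)).
  - exists (x2 - x); split; [lra|]. intros y Hy Hyx.
    assert (y < x2) by (unfold Rabs in Hyx; destruct Rcase_abs; lra).
    pose proof (proj1 (proj2 Ha) y x2 Hy H0).
    pose proof (Ha0 y Hy). pose proof (Ha0 x Hx).
    unfold Rabs; destruct Rcase_abs; lra.
  - destruct (Hs (a x - eps/2)) as [x1 [Hx1 E1]]. { lra. }
    assert (x1 < x) by (apply (Pgood_lt_inv a Ha); auto; lra).
    exists (Rmin (x2 - x) (x - x1)); split.
    { apply Rmin_glb_lt; lra. }
    intros y Hy Hyx. pose proof (Rmin_l (x2 - x) (x - x1)). pose proof (Rmin_r (x2 - x) (x - x1)).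
    assert (y < x2 /\ x1 < y) as [Hy2 Hy1] by (unfold Rabs in Hyx; destruct Rcase_abs; lra).
    pose proof (proj1 (proj2 Ha) y x2 Hy Hy2).
    pose proof (proj1 (proj2 Ha) x1 y Hx1 Hy1).
    unfold Rabs; destruct Rcase_abs; lra.
Qed.

Lemma seq_mono (s : Z -> R) : (forall n, s n < s (Z.succ n)) ->
  forall i j, (i < j)%Z -> s i < s j.
Proof.
  intros Hs i j Hij.
  assert (forall m : nat, s i < s (i + 1 + Z.of_nat m)%Z).
  { induction m.
    - replace (i + 1 + Z.of_nat 0)%Z with (Z.succ i) by lia. apply Hs.
    - replace (i + 1 + Z.of_nat (S m))%Z with (Z.succ (i + 1 + Z.of_nat m)) by lia.
      specialize (Hs (i + 1 + Z.of_nat m)%Z). lra. }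
  specialize (H (Z.to_nat (j - i - 1))).
  replace (i + 1 + Z.of_nat (Z.to_nat (j - i - 1)))%Z with j in H by lia. auto.
Qed.

Lemma seq_le (s : Z -> R) : (forall n, s n < s (Z.succ n)) ->
  forall i j, (i <= j)%Z -> s i <= s j.
Proof.
  intros Hs i j Hij. destruct (Z.eq_dec i j) as [->|]; [lra|].
  left; apply seq_mono; auto; lia.
Qed.

Lemma seq_le_inv (s : Z -> R) : (forall n, s n < s (Z.succ n)) ->
  forall i j, s i <= s j -> (i <= j)%Z.
Proof.
  intros Hs i j H. destruct (Z.le_gt_cases i j); auto.
  pose proof (seq_mono s Hs j i ltac:(lia)). lra.
Qed.

Lemma seq_up (s : Z -> R) (tau : R -> R) :
  (forall n, 0 < s n) -> (forall n, s n = tau (s (Z.succ n))) ->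
  (forall a b, 0 <= a -> a <= b -> tau a <= tau b) ->
  (forall y, 0 < y -> tau y < y) -> forall x, exists k, x < s k.
Proof.
  intros Hpos Hst Hmono Hlt x. apply NNPP; intro Hn.
  assert (Hb : forall k, s k <= x).
  { intro k. destruct (Rle_lt_dec (s k) x); auto. exfalso; apply Hn; eauto. }
  destruct (completeness (fun y => exists k, y = s k)) as [L [HL1 HL2]].
  { exists x. intros y [k ->]. auto. }
  { exists (s 0%Z); eauto. }
  assert (HL0 : s 0%Z <= L) by (apply HL1; eauto).
  pose proof (Hpos 0%Z).
  assert (L <= tau L).
  { apply HL2. intros y [k ->]. rewrite Hst. apply Hmono.
    - left; apply Hpos.
    - apply HL1; eauto. }
  specialize (Hlt L ltac:(lra)). lra.
Qed.

Lemma seq_down (s : Z -> R) (sig : R -> R) :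
  (forall n, 0 < s n) -> (forall n, s (Z.succ n) = sig (s n)) ->
  (forall a b, 0 <= a -> a <= b -> sig a <= sig b) ->
  (forall y, 0 < y -> y < sig y) -> forall x, 0 < x -> exists k, s k <= x.
Proof.
  intros Hpos Hst Hmono Hlt x Hx. apply NNPP; intro Hn.
  assert (Hb : forall k, x < s k).
  { intro k. destruct (Rle_lt_dec (s k) x); auto. exfalso; apply Hn; eauto. }
  destruct (completeness (fun y => exists k, y = - s k)) as [M [HM1 HM2]].
  { exists (- x). intros y [k ->]. specialize (Hb k); lra. }
  { exists (- s 0%Z); eauto. }
  assert (HxL : M <= - x).
  { apply HM2. intros y [k ->]. specialize (Hb k); lra. }
  assert (Hlow : forall k, - M <= s k).
  { intro k. assert (- s k <= M) by (apply HM1; eauto). lra. }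
  assert (M <= - sig (- M)).
  { apply HM2. intros y [k ->].
    rewrite <- (Z.succ_pred k), Hst.
    assert (sig (- M) <= sig (s (Z.pred k))) by (apply Hmono; [lra| apply Hlow]).
    lra. }
  specialize (Hlt (- M) ltac:(lra)). lra.
Qed.

Lemma seq_floor (s : Z -> R) : (forall n, s n < s (Z.succ n)) ->
  (forall x, exists k, x < s k) ->
  forall x, (exists k, s k <= x) -> exists n, s n <= x /\ x < s (Z.succ n).
Proof.
  intros Hs Hup x [k0 Hk0]. destruct (Hup x) as [k1 Hk1].
  assert (Hind : forall m : nat, x < s (k0 + Z.of_nat m)%Z ->
            exists n, s n <= x /\ x < s (Z.succ n)).
  { induction m; intro H.
    - rewrite Z.add_0_r in H. lra.
    - destruct (Rlt_le_dec x (s (k0 + Z.of_nat m)%Z)); auto.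
      exists (k0 + Z.of_nat m)%Z; split; auto.
      replace (Z.succ (k0 + Z.of_nat m)) with (k0 + Z.of_nat (S m))%Z by lia. auto. }
  assert (k0 <= k1)%Z.
  { apply (seq_le_inv s Hs). lra. }
  apply (Hind (Z.to_nat (k1 - k0))).
  replace (k0 + Z.of_nat (Z.to_nat (k1 - k0)))%Z with k1 by lia. auto.
Qed.

Lemma cont_pt_ext (f : R -> R) : continuous_Rplus f ->
  forall a, 0 <= a -> continuity_pt (fun t => f (Rmax 0 t)) a.
Proof.
  intros Hc a Ha. unfold continuity_pt, continue_in, limit1_in, limit_in.
  intros eps Heps. destruct (Hc a Ha eps Heps) as [d [Hd Hd']].
  exists d; split; auto. intros x [_ Hx]. simpl in *. unfold R_dist in *.
  rewrite (Rmax_right 0 a) by lra. apply Hd'. apply Rmax_l.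
  apply Rle_lt_trans with (Rabs (x - a)); auto.
  unfold Rmax; destruct (Rle_dec 0 x); [lra|].
  unfold Rabs; repeat destruct Rcase_abs; lra.
Qed.

Lemma inv_exists (f : R -> R) : class_Kinf f ->
  exists phi : R -> R, forall y, 0 <= y -> 0 <= phi y /\ f (phi y) = y.
Proof.
  intros [[Hm [Hc [Hi H0]]] Hinf].
  assert (H : forall y, exists x, 0 <= y -> 0 <= x /\ f x = y).
  { intro y. destruct (Rlt_le_dec y 0).
    { exists 0; intro; lra. }
    destruct (Req_dec y 0) as [->|Hy0].
    { exists 0; intros; split; auto; lra. }
    destruct (Hinf y) as [N [HN HN']]. specialize (HN' N (Rle_refl N)).
    destruct (Req_dec (f N) y).
    { exists N; auto. }
    assert (0 < N).
    { destruct HN as [|<-]; auto. lra. }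
    destruct (IVT_interv (fun t => f (Rmax 0 t) - y) 0 N) as [z [Hz Hz']].
    - intros a Ha. apply (continuity_pt_minus (fun t => f (Rmax 0 t)) (fct_cte y)).
      + apply cont_pt_ext; auto; lra.
      + apply continuity_pt_const. intros u v; reflexivity.
    - auto.
    - rewrite (Rmax_right 0 0) by lra. lra.
    - rewrite (Rmax_right 0 N) by lra. lra.
    - exists z. intros _. rewrite (Rmax_right 0 z) in Hz' by lra. split; lra. }
  exists (fun y => proj1_sig (constructive_indefinite_description _ (H y))).
  intros y Hy. destruct (constructive_indefinite_description _ (H y)) as [x Hx]; simpl; auto.
Qed.

Definition Fz (f phi : R -> R) (n : Z) : R -> R := fun x =>
  if (0 <=? n)%Z then Nat.iter (Z.to_nat n) f x else Nat.iter (Z.to_nat (- n)) phi x.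

Lemma Fz_good f phi n : Pgood f -> Pgood phi -> Pgood (Fz f phi n).
Proof.
  intros Hf Hp. unfold Fz. destruct (0 <=? n)%Z.
  - exact (Pgood_iter f _ Hf).
  - exact (Pgood_iter phi _ Hp).
Qed.

Lemma Fz_succ f phi : Pgood phi -> (forall y, 0 <= y -> f (phi y) = y) ->
  forall n x, 0 <= x -> Fz f phi (Z.succ n) x = f (Fz f phi n x).
Proof.
  intros Hp Hfp n x Hx. unfold Fz. destruct (Z.le_gt_cases 0 n).
  - rewrite (proj2 (Z.leb_le 0 (Z.succ n))) by lia. rewrite (proj2 (Z.leb_le 0 n)) by lia.
    replace (Z.to_nat (Z.succ n)) with (S (Z.to_nat n)) by lia. apply Nat.iter_succ.
  - destruct (Z.eq_dec n (-1)) as [->|Hn].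
    + simpl. symmetry; apply Hfp; auto.
    + rewrite (proj2 (Z.leb_gt 0 (Z.succ n))) by lia. rewrite (proj2 (Z.leb_gt 0 n)) by lia.
      replace (Z.to_nat (- n)) with (S (Z.to_nat (- Z.succ n))) by lia.
      rewrite Nat.iter_succ. rewrite Hfp; auto. apply (Pgood_iter phi _ Hp); auto.
Qed.

Lemma Fz_pred f phi : Pgood f -> Pgood phi -> (forall y, 0 <= y -> f (phi y) = y) ->
  (forall y, 0 <= y -> phi (f y) = y) ->
  forall n x, 0 <= x -> Fz f phi (Z.pred n) x = phi (Fz f phi n x).
Proof.
  intros Hf Hp Hfp Hpf n x Hx.
  replace (Fz f phi n x) with (Fz f phi (Z.succ (Z.pred n)) x) by (rewrite Z.succ_pred; reflexivity).
  rewrite Fz_succ; auto. rewrite Hpf; auto. apply (Fz_good f phi _ Hf Hp); auto.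
Qed.

Lemma Fz_comp f phi : Pgood f -> Pgood phi -> (forall y, 0 <= y -> f (phi y) = y) ->
  (forall y, 0 <= y -> phi (f y) = y) ->
  forall m k x, 0 <= x -> Fz f phi m (Fz f phi k x) = Fz f phi (m + k) x.
Proof.
  intros Hf Hp Hfp Hpf m. induction m using Z.peano_ind; intros k x Hx.
  - reflexivity.
  - assert (0 <= Fz f phi k x) by (apply (Fz_good f phi _ Hf Hp); auto).
    rewrite Fz_succ, IHm; auto. rewrite Z.add_succ_l, Fz_succ; auto.
  - assert (0 <= Fz f phi k x) by (apply (Fz_good f phi _ Hf Hp); auto).
    rewrite Fz_pred, IHm; auto. rewrite Z.add_pred_l, Fz_pred; auto.
Qed.

Lemma choice_fun {A B : Type} (P : A -> B -> Prop) :
  (forall x, exists y, P x y) -> exists g : A -> B, forall x, P x (g x).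
Proof.
  intros H. exists (fun x => proj1_sig (constructive_indefinite_description _ (H x))).
  intro x. destruct (constructive_indefinite_description _ (H x)); simpl; auto.
Qed.

Definition hfun (c y : R) : R := 1 + c * (y - 1).

Definition gdef (gamma c : R) (f phi : R -> R) (Nf : R -> Z) (x : R) : R :=
  if Rle_dec x 0 then 0
  else powerRZ gamma (Nf x) * hfun c (Fz f phi (- Nf x) x).

Theorem mainTheorem14 (gamma : R) (f : R -> R) :
  1 < gamma ->
  class_Kinf f ->
  (forall x, 0 < x -> f x > x) ->
  exists g : R -> R, class_K g /\ (forall x, 0 <= x -> g (f x) = gamma * g x).
Proof.
  intros Hg Hf Hgt.
  destruct (inv_exists f Hf) as [phi Hphi].
  destruct Hf as [[Hm [Hc [Hi H0]]] Hinf].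
  assert (Pf : Pgood f) by exact (conj Hm (conj Hi H0)).
  assert (Hfp : forall y, 0 <= y -> f (phi y) = y) by (intros; apply Hphi; auto).
  assert (Hp0 : forall y, 0 <= y -> 0 <= phi y) by (intros; apply Hphi; auto).
  assert (Hpf : forall x, 0 <= x -> phi (f x) = x).
  { intros x Hx. assert (E : f (phi (f x)) = f x) by (apply Hfp; apply Hm; auto).
    pose proof (Hp0 (f x) (Hm x Hx)).
    destruct (total_order_T (phi (f x)) x) as [[Hl|He]|Hl]; auto.
    - specialize (Hi _ _ H Hl). lra.
    - specialize (Hi _ _ Hx Hl). lra. }
  assert (Pp : Pgood phi).
  { split; [|split]; auto.
    - intros x y Hx Hxy. apply (Pgood_lt_inv f Pf); auto. apply Hp0; lra.
      rewrite !Hfp; lra.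
    - rewrite <- H0 at 1. apply Hpf; lra. }
  assert (PF : forall n, Pgood (Fz f phi n)) by (intro; apply Fz_good; auto).
  assert (Hcomp := Fz_comp f phi Pf Pp Hfp Hpf).
  assert (HF0 : forall x, Fz f phi 0 x = x) by reflexivity.
  assert (HF1 : forall x, Fz f phi 1 x = f x) by reflexivity.
  assert (Ha_succ : forall n, Fz f phi (Z.succ n) 1 = f (Fz f phi n 1))
    by (intro; apply Fz_succ; auto; lra).
  assert (Ha_pos : forall n, 0 < Fz f phi n 1).
  { intro n. destruct (PF n) as [_ [Hs Hz]]. rewrite <- Hz. apply Hs; lra. }
  assert (Ha_inc : forall n, Fz f phi n 1 < Fz f phi (Z.succ n) 1).
  { intro n. rewrite Ha_succ. apply Hgt, Ha_pos. }
  assert (Ha_up : forall x, exists k, x < Fz f phi k 1).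
  { apply (seq_up _ phi Ha_pos).
    - intro n. rewrite <- (Fz_pred f phi Pf Pp Hfp Hpf) by lra. rewrite Z.pred_succ; auto.
    - intros; apply (Pgood_weak phi Pp); auto.
    - intros y Hy. pose proof (Hp0 y ltac:(lra)).
      destruct (Req_dec (phi y) 0) as [E|E].
      + pose proof (Hfp y ltac:(lra)). rewrite E, H0 in H1. lra.
      + specialize (Hgt (phi y) ltac:(lra)). rewrite Hfp in Hgt; lra. }
  assert (Ha_down : forall x, 0 < x -> exists k, Fz f phi k 1 <= x).
  { apply (seq_down _ f Ha_pos Ha_succ).
    - intros; apply (Pgood_weak f Pf); auto.
    - intros y Hy; apply Hgt; auto. }
  destruct (choice_fun (fun x n => 0 < x -> Fz f phi n 1 <= x /\ x < Fz f phi (Z.succ n) 1))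
    as [Nf HNf].
  { intro x. destruct (Rlt_le_dec 0 x) as [Hx|Hx].
    - destruct (seq_floor _ Ha_inc Ha_up x (Ha_down x Hx)) as [n Hn]; eauto.
    - exists 0%Z; intro; lra. }
  assert (Pg0 : gamma <> 0) by lra.
  assert (Hp_succ : forall n, powerRZ gamma (Z.succ n) = gamma * powerRZ gamma n).
  { intro n. rewrite <- Z.add_1_r, powerRZ_add by auto. simpl. ring. }
  assert (Hp_pos : forall n, 0 < powerRZ gamma n) by (intro; apply powerRZ_lt; lra).
  assert (Hp_inc : forall n, powerRZ gamma n < powerRZ gamma (Z.succ n)).
  { intro n. rewrite Hp_succ. specialize (Hp_pos n). nra. }
  assert (Hp_up : forall x, exists k, x < powerRZ gamma k).
  { apply (seq_up _ (fun y => y / gamma) Hp_pos).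
    - intro n. rewrite Hp_succ. field. auto.
    - intros a b Ha Hab. unfold Rdiv. apply Rmult_le_compat_r; auto.
      left; apply Rinv_0_lt_compat; lra.
    - intros y Hy. apply Rmult_lt_reg_r with gamma; [lra|].
      unfold Rdiv. rewrite Rmult_assoc, Rinv_l by auto. nra. }
  assert (Hp_down : forall x, 0 < x -> exists k, powerRZ gamma k <= x).
  { apply (seq_down _ (fun y => gamma * y) Hp_pos Hp_succ).
    - intros; nra.
    - intros; nra. }
  assert (Hf1 : 1 < f 1) by (apply Hgt; lra).
  set (c := (gamma - 1) / (f 1 - 1)).
  assert (Hcpos : 0 < c).
  { unfold c, Rdiv. apply Rmult_lt_0_compat; [lra|]. apply Rinv_0_lt_compat; lra. }
  assert (Hh1 : hfun c 1 = 1) by (unfold hfun; ring).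
  assert (Hhf1 : hfun c (f 1) = gamma) by (unfold hfun, c; field; lra).
  assert (Hhinc : forall u v, u < v -> hfun c u < hfun c v) by (intros; unfold hfun; nra).
  assert (K1 : forall n, Fz f phi (- n) (Fz f phi n 1) = 1).
  { intro n. rewrite Hcomp by lra. replace (- n + n)%Z with 0%Z by lia. reflexivity. }
  assert (K2 : forall n, Fz f phi (- n) (Fz f phi (Z.succ n) 1) = f 1).
  { intro n. rewrite Hcomp by lra. replace (- n + Z.succ n)%Z with 1%Z by lia. reflexivity. }
  set (g := gdef gamma c f phi Nf).
  assert (Gpos : forall x, 0 < x -> g x = powerRZ gamma (Nf x) * hfun c (Fz f phi (- Nf x) x)).
  { intros x Hx. unfold g, gdef. destruct (Rle_dec x 0); [lra|auto]. }
  assert (G0 : g 0 = 0).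
  { unfold g, gdef. destruct (Rle_dec 0 0); [auto|lra]. }
  assert (Gany : forall x n, 0 < x -> Fz f phi n 1 <= x -> x <= Fz f phi (Z.succ n) 1 ->
            g x = powerRZ gamma n * hfun c (Fz f phi (- n) x)).
  { intros x n Hx H1 H2. rewrite Gpos by auto. destruct (HNf x Hx) as [N1 N2].
    assert (L1 : (Nf x <= Z.succ n)%Z) by (apply (seq_le_inv _ Ha_inc); lra).
    assert (L2 : (n < Z.succ (Nf x))%Z).
    { assert (n <= Z.succ (Nf x))%Z by (apply (seq_le_inv _ Ha_inc); lra).
      destruct (Z.eq_dec n (Z.succ (Nf x))) as [E|]; [|lia].
      rewrite E in H1. lra. }
    destruct (Z.eq_dec (Nf x) n) as [->|Hne]; auto.
    assert (E : Nf x = Z.succ n) by lia. rewrite E in *.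
    assert (Ex : x = Fz f phi (Z.succ n) 1) by lra. rewrite Ex, K1, K2, Hh1, Hhf1, Hp_succ. ring. }
  assert (Bnd : forall x, 0 < x -> 1 <= Fz f phi (- Nf x) x /\ Fz f phi (- Nf x) x < f 1).
  { intros x Hx. destruct (HNf x Hx) as [N1 N2]. split.
    - rewrite <- (K1 (Nf x)). apply (Pgood_weak _ (PF _)); auto. left; apply Ha_pos.
    - rewrite <- (K2 (Nf x)). apply (PF _); auto. lra. }
  assert (Gy : forall y, 0 < y -> powerRZ gamma (Nf y) <= g y).
  { intros y Hy. rewrite Gpos by auto. destruct (Bnd y Hy).
    assert (1 <= hfun c (Fz f phi (- Nf y) y)) by (unfold hfun; nra).
    specialize (Hp_pos (Nf y)). nra. }
  assert (Ginc : strict_incr_Rplus g).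
  { intros x y Hx Hxy.
    assert (Hy : 0 < y) by lra. pose proof (Gy y Hy). pose proof (Hp_pos (Nf y)).
    destruct (Req_dec x 0) as [->|Hx0]; [rewrite G0; lra|].
    assert (Hx' : 0 < x) by lra.
    destruct (HNf x Hx') as [N1 N2]. destruct (HNf y Hy) as [M1 M2].
    assert (L : (Nf x <= Nf y)%Z).
    { assert (Z.succ (Nf x) <= Z.succ (Nf y) \/ (Nf x <= Nf y))%Z as [|]; [|lia|auto].
      left. apply (seq_le_inv _ Ha_inc). 
      destruct (Z.le_gt_cases (Nf x) (Nf y)); [|].
      - apply (seq_le _ Ha_inc). lia.
      - exfalso. pose proof (seq_le _ Ha_inc (Z.succ (Nf y)) (Nf x) ltac:(lia)). lra. }
    destruct (Z.eq_dec (Nf x) (Nf y)) as [E|E].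
    - rewrite !Gpos by auto. rewrite E. apply Rmult_lt_compat_l; auto.
      apply Hhinc. apply (PF _); lra.
    - rewrite Gpos by auto. destruct (Bnd x Hx') as [B1 B2].
      pose proof (Hhinc _ _ B2) as B3. rewrite Hhf1 in B3.
      pose proof (Hp_pos (Nf x)) as B4.
      pose proof (seq_le _ Hp_inc (Z.succ (Nf x)) (Nf y) ltac:(lia)) as B5.
      rewrite Hp_succ in B5. nra. }
  assert (Gnn : forall x, 0 <= x -> 0 <= g x).
  { intros x Hx. destruct (Req_dec x 0) as [->|]; [lra|].
    rewrite <- G0. left; apply Ginc; lra. }
  assert (Gsurj : forall v, 0 <= v -> exists x, 0 <= x /\ g x = v).
  { intros v Hv. destruct (Req_dec v 0) as [->|Hv0]; [exists 0; split; auto; lra|].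
    destruct (seq_floor _ Hp_inc Hp_up v (Hp_down v ltac:(lra))) as [n [Hn1 Hn2]].
    rewrite Hp_succ in Hn2. pose proof (Hp_pos n).
    set (w := v / powerRZ gamma n).
    assert (Ew : w * powerRZ gamma n = v) by (unfold w; field; lra).
    assert (Hw1 : 1 <= w) by nra. assert (Hw2 : w < gamma) by nra.
    set (y := 1 + (w - 1) * (f 1 - 1) / (gamma - 1)).
    assert (Ey : (y - 1) * (gamma - 1) = (w - 1) * (f 1 - 1)) by (unfold y; field; lra).
    assert (Hy1 : 1 <= y) by nra. assert (Hy2 : y < f 1) by nra.
    assert (Hhy : hfun c y = w) by (unfold hfun, c, y; field; lra).
    exists (Fz f phi n y).
    assert (A1 : Fz f phi n 1 <= Fz f phi n y) by (apply (Pgood_weak _ (PF _)); lra).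
    assert (A2 : Fz f phi n y <= Fz f phi (Z.succ n) 1).
    { replace (Fz f phi (Z.succ n) 1) with (Fz f phi n (f 1))
        by (rewrite <- HF1, Hcomp by lra; rewrite Z.add_1_r; reflexivity).
      apply (Pgood_weak _ (PF _)); lra. }
    pose proof (Ha_pos n).
    split; [lra|].
    rewrite (Gany _ n) by lra. rewrite Hcomp by lra. replace (- n + n)%Z with 0%Z by lia.
    rewrite HF0, Hhy. lra. }
  exists g. split.
  - split; [exact Gnn|split; [|split; [exact Ginc|exact G0]]].
    apply cont_of_surj; auto. split; [exact Gnn|split; [exact Ginc|exact G0]].
  - intros x Hx. destruct (Req_dec x 0) as [->|Hx0].
    { rewrite H0, G0. ring. }
    assert (Hx' : 0 < x) by lra.
    destruct (HNf x Hx') as [N1 N2].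
    assert (Hfx : 0 < f x) by (specialize (Hgt x Hx'); lra).
    rewrite (Gany (f x) (Z.succ (Nf x))); auto.
    + rewrite (Gpos x Hx'). rewrite <- HF1 at 1. rewrite Hcomp by lra.
      replace (- Z.succ (Nf x) + 1)%Z with (- Nf x)%Z by lia. rewrite Hp_succ. ring.
    + rewrite Ha_succ. apply (Pgood_weak _ Pf); auto. left; apply Ha_pos.
    + rewrite Ha_succ. apply (Pgood_weak _ Pf); auto. lra.
Qed.
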